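(* Let $L=(T,V,E)$ be a link stream (as defined in the context) with $m=|E|>0$, let $\mathcal{C}$ be a dynamic community structure on $L$, let $\lfloor \mathcal{C} \rfloor=\{\lfloor C\rfloor\}_{C\in\mathcal{C}}$ be its trimmed version, and let $\omega>0$. Then $$Q_{\star}(L,\lfloor \mathcal{C}\rfloor,\omega)\ \ge\ Q_{\star}(L,\mathcal{C},\omega),$$ for $\star = JM$ and for $\star = MM$, where $Q_\star$ denotes Longitudinal Modularity as defined in the context.
   Context: A link stream is a triple $L=(T,V,E)$ where $T\subset\mathbb{R}$ is a finite (discrete) set of time instants, $V$ is a finite set of nodes, and $E\subseteq \{(uv,t): u,v\in V,\ t\in T\}$ is a finite set of instantaneous, undirected, unweighted interactions. Write $uv_t=1$ if $(uv,t)\in E$ and $0$ otherwise; for $T'\subseteq T$ put $L_{uv,T'}=\sum_{t\in T'} uv_t$, $L_{uv}=L_{uv,T}$, $k_u=\sum_{v\in V}L_{uv}$ (degree), and $m=\sum_{u\in V}k_u/2=|E|$. A time node is a pair $ut\in V\times T$. A dynamic community structure $\mathcal{C}$ is a collection of non-empty, pairwise disjoint communities, each community $C$ being a set of time nodes. For a community $C$ and node $u$: $T_{u\in C}=\{t\in T: ut\in C\}$; $T_C=\bigcup_{u\in V}T_{u\in C}$; $L_{uv\in C}=L_{uv,\,T_{u\in C}\cap T_{v\in C}}$. For a node $u$, $\eta_u(\mathcal{C})$ (community switch count) is the number of communities of $\mathcal{C}$ visited by $u$, minus one. Expectations: $\mathbb{E}_{JM}[L_{uv\in C}]=\frac{k_uk_v}{2m}\frac{|T_C|}{|T|}\mathbb{1}_{|T_{u\in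 C}||T_{v\in C}|>0}$, and $\mathbb{E}_{MM}[L_{uv\in C}]=\frac{k_uk_v}{2m}\frac{\sqrt{|T_{u\in C}||T_{v\in C}|}}{|T|}$. Longitudinal Modularity, for $\star\in\{JM,MM\}$: $$Q_\star(L,\mathcal{C},\omega)=\frac{1}{2m}\sum_{C\in\mathcal{C}}\sum_{(u,v)\in V^2}\big[L_{uv\in C}-\mathbb{E}_\star[L_{uv\in C}]\big]-\frac{\omega}{2m}\sum_{u\in V}\eta_u(\mathcal{C}).$$ Active time nodes: $A=\{ut\in V\times T:\exists v\in V,\ (uv,t)\in E\}$; $T_{u\in C\cap A}=\{t: ut\in C\cap A\}$. The trimmed existence time of $u$ in $C$ is $\lfloor T_{u\in C}\rfloor = T_{u\in C}\cap[\min T_{u\in C\cap A},\ \max T_{u\in C\cap A}]$ (the smallest subset of $T_{u\in C}$ containing all time instants between the first and last instant at which $u$ is active within $C$; empty if $u$ is never active within $C$). The trimmed existence time of $C$ is $\lfloor T_C\rfloor=\bigcup_u\lfloor T_{u\in C}\rfloor$, the trimmed community is $\lfloor C\rfloor=\bigcup_{u\in V}\{u\}\times\lfloor T_{u\in C}\rfloor$, and $\lfloor\mathcal{C}\rfloor=\{\lfloor C\rfloor\}_{C\in\mathcal{C}}$, with $Q_\star(L,\lfloor\mathcal{C}\rfloor,\omega)$ computed by the same formula. *)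

(* Defs.v *)
From HB Require Import structures.
From mathcomp Require Import all_boot all_order all_algebra.
From mathcomp Require Import reals.
Set Implicit Arguments.
Unset Strict Implicit.
Unset Printing Implicit Defensive.
Import Order.TTheory GRing.Theory Num.Theory.
Local Open Scope ring_scope.

(* A link stream L = (T, V, E): T is a finite totally ordered set of time
   instants (e.g. a finite subset of the reals), V a finite node set, and
   E t u v  <=>  (uv, t) \in E  (undirected: E t is symmetric). *)
Section LinkStream.
Variable R : realType.
Variables (d : Order.disp_t) (T : finOrderType d) (V : finType).
Variable E : T -> rel V.

Definition Lw (u v : V) (A : {set T}) : nat := \sum_(t in A) (E t u v : nat).
Definition deg (u : V) : nat := \sum_(v : V) Lw u v [set: T].
Definition mm : R := (\sum_(u : V) deg u)%:R / 2.

Definition Tin (C : {set V * T}) (u : V) : {set T} := [set t | (u, t) \in C].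
Definition TC (C : {set V * T}) : {set T} := [set t | [exists u, (u, t) \in C]].
Definition Lin (C : {set V * T}) (u v : V) : nat := Lw u v (Tin C u :&: Tin C v).

Definition EJM (C : {set V * T}) (u v : V) : R :=
  (deg u * deg v)%:R / (2 * mm) * (#|TC C|%:R / #|T|%:R)
  * (if (0 < #|Tin C u| * #|Tin C v|)%N then 1 else 0).
Definition EMM (C : {set V * T}) (u v : V) : R :=
  (deg u * deg v)%:R / (2 * mm)
  * (Num.sqrt ((#|Tin C u| * #|Tin C v|)%:R) / #|T|%:R).

Definition eta (Cs : {set {set V * T}}) (u : V) : R :=
  #|[set C in Cs | [exists t, (u, t) \in C]]|%:R - 1.

Definition LQ (Exp : {set V * T} -> V -> V -> R) (Cs : {set {set V * T}})
  (omega : R) : R :=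
  (2 * mm)^-1 * (\sum_(C in Cs) \sum_(u : V) \sum_(v : V) ((Lin C u v)%:R - Exp C u v))
  - omega / (2 * mm) * \sum_(u : V) eta Cs u.

Definition QJM := LQ EJM.
Definition QMM := LQ EMM.

Definition active (u : V) (t : T) : bool := [exists v, E t u v].

(* trimmed existence time of u in C:
   T_{u in C} /\ [min T_{u in C cap A}, max T_{u in C cap A}] *)
Definition trimT (C : {set V * T}) (u : V) : {set T} :=
  [set t in Tin C u | [exists a : T, exists b : T,
     [&& (u, a) \in C, active u a, (u, b) \in C, active u b,
         (a <= t)%O & (t <= b)%O]]].

Definition trim (C : {set V * T}) : {set V * T} := [set p | p.2 \in trimT C p.1].
Definition trimCS (Cs : {set {set V * T}}) : {set {set V * T}} :=
  [set trim C | C in Cs].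

Definition is_dcs (Cs : {set {set V * T}}) : bool :=
  (set0 \notin Cs) && trivIset Cs.

End LinkStream.

(* Main.v *)
Require Import Defs.
From HB Require Import structures.
From mathcomp Require Import all_boot all_order all_algebra.
From mathcomp Require Import reals.
Import Order.TTheory GRing.Theory Num.Theory.
Local Open Scope ring_scope.

Lemma Tin_trim {d} {T : finOrderType d} {V : finType} (E : T -> rel V) C u :
  Tin (trim E C) u = trimT E C u.
Proof. by apply/setP => t; rewrite !inE. Qed.

Lemma trimT_sub {d} {T : finOrderType d} {V : finType} (E : T -> rel V) C u :
  trimT E C u \subset Tin C u.
Proof. by apply/subsetP => t; rewrite inE => /andP[]. Qed.

Lemma trim_sub {d} {T : finOrderType d} {V : finType} (E : T -> rel V) C :
  trim E C \subset C.
Proof.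
apply/subsetP => -[u t]; rewrite inE /= => /(subsetP (trimT_sub E C u)).
by rewrite inE.
Qed.

Lemma trimT_active {d} {T : finOrderType d} {V : finType} (E : T -> rel V)
  (C : {set V * T}) x t : (x,t) \in C -> active E x t -> t \in trimT E C x.
Proof.
move=> Ct At. rewrite inE; apply/andP; split; first by rewrite inE.
apply/existsP; exists t; apply/existsP; exists t.
by rewrite Ct At le_refl.
Qed.

Lemma Lin_trim {d} {T : finOrderType d} {V : finType} (E : T -> rel V)
  (Esym : forall t, symmetric (E t)) C u v :
  Lin E (trim E C) u v = Lin E C u v.
Proof.
rewrite /Lin /Lw !Tin_trim [LHS]big_mkcond [RHS]big_mkcond /=.
apply: eq_bigr => t _.
case Et: (E t u v); last by case: ifP; case: ifP.
have Hin : forall x w, E t x w -> (x, t) \in C -> t \in trimT E C x.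
  move=> x w Ew Ct; apply: trimT_active => //; apply/existsP; by exists w.
have Evu : E t v u by rewrite Esym.
rewrite !in_setI.
case Cu: ((u, t) \in C); case Cv: ((v, t) \in C).
- by rewrite (Hin _ _ Et Cu) (Hin _ _ Evu Cv) !inE Cu Cv.
- rewrite [t \in Tin C v]inE Cv andbF.
  by case: ifP => // /andP[_ /(subsetP (trimT_sub E C v))]; rewrite inE Cv.
- rewrite [t \in Tin C u]inE Cu.
  by case: ifP => // /andP[/(subsetP (trimT_sub E C u))]; rewrite inE Cu.
- rewrite [t \in Tin C u]inE Cu.
  by case: ifP => // /andP[/(subsetP (trimT_sub E C u))]; rewrite inE Cu.
Qed.

Lemma TC_trim {d} {T : finOrderType d} {V : finType} (E : T -> rel V) C :
  TC (trim E C) \subset TC C.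
Proof.
apply/subsetP => t; rewrite !inE => /existsP[u Hu]; apply/existsP; exists u.
exact: (subsetP (trim_sub E C)).
Qed.

Lemma Tin_trim_sub {d} {T : finOrderType d} {V : finType} (E : T -> rel V) C u :
  Tin (trim E C) u \subset Tin C u.
Proof. by rewrite Tin_trim trimT_sub. Qed.

Lemma coef_ge0 (R : realType) {d} {T : finOrderType d} {V : finType} (E : T -> rel V)
  (hm : 0 < mm R E) (n : nat) : 0 <= n%:R / (2 * mm R E).
Proof. by rewrite divr_ge0 // mulr_ge0 // ltW. Qed.

Lemma EJM_trim (R : realType) {d} {T : finOrderType d} {V : finType} (E : T -> rel V)
  (hm : 0 < mm R E) C u v : EJM R E (trim E C) u v <= EJM R E C u v.
Proof.
rewrite /EJM; apply: ler_pM.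
- by apply: mulr_ge0; [exact: coef_ge0| rewrite divr_ge0].
- by case: ifP.
- apply: ler_wpM2l; first exact: coef_ge0.
  apply: ler_wpM2r; first by rewrite invr_ge0.
  by rewrite ler_nat subset_leq_card // TC_trim.
- case: ifP => H; last by case: ifP.
  rewrite ifT //;
  exact: (leq_trans H (leq_mul (subset_leq_card (Tin_trim_sub E C u)) (subset_leq_card (Tin_trim_sub E C v)))).
Qed.

Lemma EMM_trim (R : realType) {d} {T : finOrderType d} {V : finType} (E : T -> rel V)
  (hm : 0 < mm R E) C u v : EMM R E (trim E C) u v <= EMM R E C u v.
Proof.
rewrite /EMM; apply: ler_wpM2l; first exact: coef_ge0.
apply: ler_wpM2r; first by rewrite invr_ge0.
rewrite ler_sqrt // ler_nat; apply: leq_mul; apply: subset_leq_card;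
exact: Tin_trim_sub.
Qed.

Lemma EJM_ge0 (R : realType) {d} {T : finOrderType d} {V : finType} (E : T -> rel V)
  (hm : 0 < mm R E) C u v : 0 <= EJM R E C u v.
Proof.
rewrite /EJM; apply: mulr_ge0; last by case: ifP.
by apply: mulr_ge0; [exact: coef_ge0| rewrite divr_ge0].
Qed.

Lemma EMM_ge0 (R : realType) {d} {T : finOrderType d} {V : finType} (E : T -> rel V)
  (hm : 0 < mm R E) C u v : 0 <= EMM R E C u v.
Proof.
rewrite /EMM; apply: mulr_ge0; first exact: coef_ge0.
apply: divr_ge0 => //; exact: sqrtr_ge0.
Qed.

Lemma Tin0 {d} {T : finOrderType d} {V : finType} u :
  Tin (set0 : {set V * T}) u = set0.
Proof. by apply/setP => t; rewrite !inE. Qed.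

Lemma EJM0 (R : realType) {d} {T : finOrderType d} {V : finType} (E : T -> rel V) u v :
  EJM R E set0 u v = 0.
Proof. by rewrite /EJM !Tin0 cards0 mul0n ltnn mulr0. Qed.

Lemma EMM0 (R : realType) {d} {T : finOrderType d} {V : finType} (E : T -> rel V) u v :
  EMM R E set0 u v = 0.
Proof. by rewrite /EMM !Tin0 cards0 mul0n sqrtr0 mul0r mulr0. Qed.

Lemma Lin0 {d} {T : finOrderType d} {V : finType} (E : T -> rel V) u v :
  Lin E set0 u v = 0%N.
Proof. by rewrite /Lin /Lw !Tin0 setI0 big_set0. Qed.

Lemma LQ_trim (R : realType) {d} {T : finOrderType d} {V : finType} (E : T -> rel V)
  (Esym : forall t, symmetric (E t))
  (Exp : {set V * T} -> V -> V -> R)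
  (Etr : forall C u v, Exp (trim E C) u v <= Exp C u v)
  (Ege : forall C u v, 0 <= Exp C u v)
  (E0 : forall u v, Exp set0 u v = 0)
  (Cs : {set {set V * T}}) (omega : R)
  (hm : 0 < mm R E) (hCs : is_dcs Cs) (homega : 0 < omega) :
  LQ E Exp Cs omega <= LQ E Exp (trimCS E Cs) omega.
Proof.
move: hCs => /andP[_ triv].
set G := fun C => \sum_(u : V) \sum_(v : V) ((Lin E C u v)%:R - Exp C u v).
have GT : forall C, G C <= G (trim E C).
  move=> C; apply: ler_sum => u _; apply: ler_sum => v _.
  by rewrite Lin_trim // lerB.
have G0 : G set0 = 0.
  by rewrite /G big1 // => u _; rewrite big1 // => v _; rewrite Lin0 E0 subrr.
have Gle0 : forall C, trim E C = set0 -> G C <= 0.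
  move=> C H0; rewrite /G sumr_le0 // => u _; rewrite sumr_le0 // => v _.
  by rewrite -Lin_trim // H0 Lin0 sub0r oppr_le0.
have HS : \sum_(C in Cs) G C <= \sum_(C in trimCS E Cs) G C.
  rewrite /trimCS (partition_big_imset (trim E)) /=.
  apply: ler_sum => C' /imsetP[C0 C0in ->].
  have [H0|Hn0] := eqVneq (trim E C0) set0.
    rewrite H0 G0; apply: sumr_le0 => C /andP[_ /eqP]; exact: Gle0.
  rewrite (big_pred1 C0); first exact: GT.
  move=> C /=; apply/idP/idP.
    move=> /andP[Cin /eqP Heq]; apply/eqP; apply/eqP; apply/negPn/negP => Hne.
    move/trivIsetP: triv => /(_ C C0 Cin C0in Hne) /disjoint_setI0 Hd.
    case/set0Pn: Hn0 => p Hp.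
    have : p \in C :&: C0.
      rewrite inE; apply/andP; split; apply: (subsetP (trim_sub E _)) => //.
      by rewrite Heq.
    by rewrite Hd inE.
  by move=> /eqP ->; rewrite C0in eqxx.
have HE : \sum_(u : V) Defs.eta R (trimCS E Cs) u <= \sum_(u : V) Defs.eta R Cs u.
  apply: ler_sum => u _; rewrite /eta lerB // ler_nat.
  apply: leq_trans (leq_imset_card (trim E) _); apply: subset_leq_card.
  apply/subsetP => C'; rewrite inE => /andP[/imsetP[C Cin ->] /existsP[t Ht]].
  apply/imsetP; exists C => //; rewrite inE Cin /=; apply/existsP; exists t.
  exact: (subsetP (trim_sub E C)).
have h2 : 0 <= 2 * mm R E by apply: mulr_ge0 => //; exact: ltW.
rewrite /LQ; apply: lerB.
  by apply: ler_wpM2l HS; rewrite invr_ge0.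
by apply: ler_wpM2l HE; rewrite divr_ge0 // ltW.
Qed.

Theorem mainTheorem1 (R : realType) (d : Order.disp_t) (T : finOrderType d)
  (V : finType) (E : T -> rel V)
  (Esym : forall t, symmetric (E t)) (Eirr : forall t, irreflexive (E t))
  (Cs : {set {set V * T}}) (omega : R)
  (hm : 0 < mm R E) (hCs : is_dcs Cs) (homega : 0 < omega) :
  QJM E (trimCS E Cs) omega >= QJM E Cs omega /\
  QMM E (trimCS E Cs) omega >= QMM E Cs omega.
Proof.
split; apply: LQ_trim => //.
- exact: EJM_trim.
- exact: EJM_ge0.
- exact: EJM0.
- exact: EMM_trim.
- exact: EMM_ge0.
- exact: EMM0.
Qed.
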